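(* Let $G = G_1\times\dots\times G_n$ be a direct product of finitely generated groups $G_i$, and let $\varphi\in\mathrm{Aut}(G)$ be of the form $(g_1,\dots,g_n)\mapsto(\varphi_1(g_1),\dots,\varphi_n(g_n))$ with $\varphi_i\in\mathrm{Aut}(G_i)$ for all $1\le i\le n$. Then the $\varphi$-twisted conjugacy problem $\mathrm{TCP}_\varphi(G)$ is solvable if and only if $\mathrm{TCP}_{\varphi_i}(G_i)$ is solvable for all $1\le i\le n$.
   Context: For a group $H$ with finite generating set $Y$ and $\psi\in\mathrm{Aut}(H)$, elements $u,v\in H$ are $\psi$-twisted conjugate if there exists $w\in H$ with $v=\psi(w)^{-1}uw$. The $\psi$-twisted conjugacy problem $\mathrm{TCP}_\psi(H)$ asks for an algorithm that, given two words over $Y\cup Y^{-1}$, decides whether the elements they represent are $\psi$-twisted conjugate in $H$. *)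

(* Defs.v *)
From Stdlib Require Import FunctionalExtensionality.
From Stdlib Require List.
From mathcomp Require Import all_boot.
Set Implicit Arguments. Unset Strict Implicit. Unset Printing Implicit Defensive.

Record group := Group {
  gcar :> Type;
  gmul : gcar -> gcar -> gcar;
  gone : gcar;
  ginv : gcar -> gcar;
  gmulA : forall x y z, gmul x (gmul y z) = gmul (gmul x y) z;
  gmul1g : forall x, gmul gone x = x;
  gmulVg : forall x, gmul (ginv x) x = gone
}.

Definition is_aut (H : group) (f : H -> H) : Prop :=
  (forall x y, f (gmul x y) = gmul (f x) (f y)) /\ bijective f.

Section Product.
Variables (n : nat) (G : 'I_n -> group).
Definition prod_car := forall i : 'I_n, G i.
Definition prod_mul (x y : prod_car) : prod_car := fun i => gmul (x i) (y i).
Definition prod_one : prod_car := fun i => gone (G i).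
Definition prod_inv (x : prod_car) : prod_car := fun i => ginv (x i).
Lemma prod_mulA x y z : prod_mul x (prod_mul y z) = prod_mul (prod_mul x y) z.
Proof. apply: functional_extensionality_dep => i; exact: gmulA. Qed.
Lemma prod_mul1g x : prod_mul prod_one x = x.
Proof. apply: functional_extensionality_dep => i; exact: gmul1g. Qed.
Lemma prod_mulVg x : prod_mul (prod_inv x) x = prod_one.
Proof. apply: functional_extensionality_dep => i; exact: gmulVg. Qed.
Definition prod_group : group :=
  @Group prod_car prod_mul prod_one prod_inv prod_mulA prod_mul1g prod_mulVg.

Definition prod_map (phi : forall i, G i -> G i) : prod_group -> prod_group :=
  fun x i => phi i (x i).
End Product.

(* Words over Y u Y^-1, for a finite generating list Y = [y_0,...].   *)
(* The letter (b, i) stands for y_i if b = false and y_i^-1 if b.     *)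
Definition word := seq (bool * nat).

Definition valid_word (k : nat) (w : word) : bool := all (fun l => l.2 < k) w.

Definition eval_word (H : group) (Y : seq H) (w : word) : H :=
  foldr (fun l acc => gmul (if l.1 then ginv (nth (gone H) Y l.2)
                            else nth (gone H) Y l.2) acc) (gone H) w.

Definition generates (H : group) (Y : seq H) : Prop :=
  forall g : H, exists2 w, valid_word (size Y) w & eval_word Y w = g.

Definition twisted_conj (H : group) (psi : H -> H) (u v : H) : Prop :=
  exists w : H, v = gmul (ginv (psi w)) (gmul u w).

Inductive prf : Type :=
| PZero : prf
| PSucc : prf
| PProj : nat -> prf
| PComp : prf -> list prf -> prf
| PPrim : prf -> prf -> prf
| PMu   : prf -> prf.

Inductive prf_eval : prf -> list nat -> nat -> Prop :=
| ev_zero xs : prf_eval PZero xs 0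
| ev_succ xs : prf_eval PSucc xs (head 0 xs).+1
| ev_proj i xs : prf_eval (PProj i) xs (nth 0 xs i)
| ev_comp f gs xs ys z :
    List.Forall2 (fun g y => prf_eval g xs y) gs ys ->
    prf_eval f ys z -> prf_eval (PComp f gs) xs z
| ev_prim0 f g xs y : prf_eval f xs y -> prf_eval (PPrim f g) (0 :: xs) y
| ev_primS f g m xs y z :
    prf_eval (PPrim f g) (m :: xs) y ->
    prf_eval g (m :: y :: xs) z ->
    prf_eval (PPrim f g) (m.+1 :: xs) z
| ev_mu f xs m :
    prf_eval f (m :: xs) 0 ->
    (forall j, j < m -> exists k, prf_eval f (j :: xs) k.+1) ->
    prf_eval (PMu f) xs m.

(* Standard (computable, injective) encoding of words as naturals. *)
Definition word_code (w : word) : nat := pickle w.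

Definition TCP_solvable (H : group) (psi : H -> H) : Prop :=
  exists Y : seq H, generates Y /\
  exists p : prf, forall u v : word,
    valid_word (size Y) u -> valid_word (size Y) v ->
    (twisted_conj psi (eval_word Y u) (eval_word Y v) ->
       prf_eval p [:: word_code u; word_code v] 1) /\
    (~ twisted_conj psi (eval_word Y u) (eval_word Y v) ->
       prf_eval p [:: word_code u; word_code v] 0).

(* Main.v *)
Require Import Defs.
From Stdlib Require Import FunctionalExtensionality ClassicalEpsilon Classical.
From Stdlib Require List.
From mathcomp Require Import all_boot.
From mathcomp Require Import zify.
Set Implicit Arguments. Unset Strict Implicit. Unset Printing Implicit Defensive.

Definition PR k (F : seq nat -> nat) :=
  exists p, forall xs, size xs = k -> prf_eval p xs (F xs).

Lemma PR_ext k F G : PR k F -> (forall xs, size xs = k -> F xs = G xs) -> PR k G.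
Proof. move=> [p Hp] E; exists p => xs Hs; rewrite -E //; exact: Hp. Qed.

Lemma PR_zero k : PR k (fun _ => 0).
Proof. by exists PZero => xs _; constructor. Qed.

Lemma PR_proj k i : PR k (fun xs => nth 0 xs i).
Proof. by exists (PProj i) => xs _; constructor. Qed.

Lemma PR_comp k F (Gs : seq (seq nat -> nat)) :
  List.Forall (PR k) Gs -> PR (size Gs) F ->
  PR k (fun xs => F (map (fun G => G xs) Gs)).
Proof.
move=> HG [pf Hf].
have [ps Hps] : exists ps, size ps = size Gs /\ forall xs, size xs = k ->
   List.Forall2 (fun g y => prf_eval g xs y) ps (map (fun G => G xs) Gs).
  elim: HG => [|G Gs' [pG HpG] _ [ps [Hs IH]]]; first by exists [::]; split=> // xs _; constructor.
  exists (pG :: ps); split; first by rewrite /= Hs.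
  by move=> xs Hxs; constructor; [apply: HpG | apply: IH].
exists (PComp pf ps) => xs Hxs. 
have H1 := (proj2 Hps) xs Hxs.
have H2 : prf_eval pf (map (fun G => G xs) Gs) (F (map (fun G => G xs) Gs)) by apply: Hf; rewrite size_map.
exact: (ev_comp H1 H2).
Qed.

Lemma PR_comp1 k F G1 : PR 1 F -> PR k G1 -> PR k (fun xs => F [:: G1 xs]).
Proof. move=> HF H1; apply: (@PR_comp k F [:: G1]) => //; do ! (apply: List.Forall_cons => //); exact: List.Forall_nil. Qed.

Lemma PR_comp2 k F G1 G2 : PR 2 F -> PR k G1 -> PR k G2 ->
  PR k (fun xs => F [:: G1 xs; G2 xs]).
Proof. move=> HF H1 H2; apply: (@PR_comp k F [:: G1; G2]) => //; do ! (apply: List.Forall_cons => //); exact: List.Forall_nil. Qed.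

Lemma PR_comp3 k F G1 G2 G3 : PR 3 F -> PR k G1 -> PR k G2 -> PR k G3 ->
  PR k (fun xs => F [:: G1 xs; G2 xs; G3 xs]).
Proof. move=> HF H1 H2 H3; apply: (@PR_comp k F [:: G1; G2; G3]) => //; do ! (apply: List.Forall_cons => //); exact: List.Forall_nil. Qed.

Lemma PR_succ k F : PR k F -> PR k (fun xs => (F xs).+1).
Proof.
move=> HF; have H : PR 1 (fun ys => (head 0 ys).+1) by exists PSucc => xs _; constructor.
exact: (PR_comp1 H HF).
Qed.

Lemma PR_const k c : PR k (fun _ => c).
Proof. elim: c => [|c IH]; [exact: PR_zero | exact: PR_succ IH]. Qed.

Fixpoint natrec (b : nat) (s : nat -> nat -> nat) n :=
  if n is m.+1 then s m (natrec b s m) else b.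

Lemma Forall2_proj xs l :
  List.Forall2 (fun g y => prf_eval g xs y) (map PProj l) (map (nth 0 xs) l).
Proof. by elim: l => [|i l IH] /=; constructor => //; constructor. Qed.

Lemma PR_rec k A B S : PR k A -> PR k B -> PR k.+2 S ->
  PR k (fun xs => natrec (B xs) (fun m y => S [:: m, y & xs]) (A xs)).
Proof.
move=> [pa Ha] [pb Hb] [ps Hs].
exists (PComp (PPrim pb ps) (pa :: map PProj (iota 0 k))) => xs Hxs.
econstructor.
  constructor; first exact: Ha.
  exact: Forall2_proj.
have -> : map (nth 0 xs) (iota 0 k) = xs by rewrite -Hxs; exact: mkseq_nth.
elim: (A xs) => [|m IH] /=; first by constructor; apply: Hb.
econstructor; first exact: IH.
by apply: Hs; rewrite /= Hxs.
Qed.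

Lemma PR_reindex k m F idx : PR m F -> size idx = m ->
  PR k (fun xs => F (map (nth 0 xs) idx)).
Proof.
move=> HF Hs.
have HF' : PR (size (map (fun i xs => nth 0 xs i) idx)) F by rewrite size_map Hs.
have HA : List.Forall (PR k) (map (fun i xs => nth 0 xs i) idx).
  by elim: idx {Hs HF HF'} => [|i idx IH] /=; constructor => //; exact: PR_proj.
apply: PR_ext; first exact: (PR_comp HA HF').
by move=> xs _ /=; rewrite -map_comp.
Qed.

Lemma PR_pred1 : PR 1 (fun xs => (nth 0 xs 0).-1).
Proof.
have := @PR_rec 1 (fun xs => nth 0 xs 0) (fun _ => 0) (fun zs => nth 0 zs 0)
  (PR_proj _ _) (PR_zero _) (PR_proj _ _).
move/PR_ext; apply=> xs _; by elim: (nth 0 xs 0).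
Qed.

Lemma PR_pred k F : PR k F -> PR k (fun xs => (F xs).-1).
Proof. move=> H; exact: (PR_comp1 PR_pred1 H). Qed.

Lemma PR_add2 : PR 2 (fun xs => nth 0 xs 0 + nth 0 xs 1).
Proof.
have := @PR_rec 2 (fun xs => nth 0 xs 1) (fun xs => nth 0 xs 0) (fun zs => (nth 0 zs 1).+1)
  (PR_proj _ _) (PR_proj _ _) (PR_succ (PR_proj _ _)).
move/PR_ext; apply=> xs _ /=; elim: (nth 0 xs 1) => [|m IH] /=; by rewrite ?addn0 ?addnS ?IH.
Qed.

Lemma PR_add k F G : PR k F -> PR k G -> PR k (fun xs => F xs + G xs).
Proof. move=> H1 H2; exact: (PR_comp2 PR_add2 H1 H2). Qed.

Lemma PR_sub2 : PR 2 (fun xs => nth 0 xs 0 - nth 0 xs 1).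
Proof.
have := @PR_rec 2 (fun xs => nth 0 xs 1) (fun xs => nth 0 xs 0) (fun zs => (nth 0 zs 1).-1)
  (PR_proj _ _) (PR_proj _ _) (PR_pred (PR_proj _ _)).
move/PR_ext; apply=> xs _ /=; elim: (nth 0 xs 1) => [|m IH] /=; by rewrite ?subn0 ?subnS ?IH.
Qed.

Lemma PR_sub k F G : PR k F -> PR k G -> PR k (fun xs => F xs - G xs).
Proof. move=> H1 H2; exact: (PR_comp2 PR_sub2 H1 H2). Qed.

Lemma PR_mul2 : PR 2 (fun xs => nth 0 xs 0 * nth 0 xs 1).
Proof.
have := @PR_rec 2 (fun xs => nth 0 xs 1) (fun xs => 0) (fun zs => nth 0 zs 1 + nth 0 zs 2)
  (PR_proj _ _) (PR_zero _) (PR_add (PR_proj _ _) (PR_proj _ _)).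
move/PR_ext; apply=> xs _ /=; elim: (nth 0 xs 1) => [|m IH] /=; [by rewrite muln0 | by rewrite IH mulnS addnC].
Qed.

Lemma PR_mul k F G : PR k F -> PR k G -> PR k (fun xs => F xs * G xs).
Proof. move=> H1 H2; exact: (PR_comp2 PR_mul2 H1 H2). Qed.

Lemma PR_pow2_1 : PR 1 (fun xs => 2 ^ nth 0 xs 0).
Proof.
have := @PR_rec 1 (fun xs => nth 0 xs 0) (fun xs => 1) (fun zs => nth 0 zs 1 + nth 0 zs 1)
  (PR_proj _ _) (PR_const _ _) (PR_add (PR_proj _ _) (PR_proj _ _)).
move/PR_ext; apply=> xs _ /=; elim: (nth 0 xs 0) => [|m IH] //=; by rewrite IH expnS mul2n addnn.
Qed.

Lemma PR_pow2 k F : PR k F -> PR k (fun xs => 2 ^ F xs).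
Proof. move=> H; exact: (PR_comp1 PR_pow2_1 H). Qed.

Lemma PR_eqb k F G : PR k F -> PR k G -> PR k (fun xs => nat_of_bool (F xs == G xs)).
Proof.
move=> H1 H2.
apply: PR_ext; first apply: (PR_sub (PR_const _ 1) (PR_add (PR_sub H1 H2) (PR_sub H2 H1))).
move=> xs _ /=; case: eqP => [->|]; first by rewrite subnn.
lia.
Qed.

Lemma PR_leb k F G : PR k F -> PR k G -> PR k (fun xs => nat_of_bool (F xs <= G xs)).
Proof.
move=> H1 H2.
apply: PR_ext; first apply: (PR_sub (PR_const _ 1) (PR_sub H1 H2)).
move=> xs _ /=; case: leqP => H; lia.
Qed.

Lemma PR_ite k C F G : PR k C -> PR k F -> PR k G ->
  PR k (fun xs => if C xs == 0 then G xs else F xs).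
Proof.
move=> H0 H1 H2.
apply: PR_ext; first apply: (PR_add (PR_mul (PR_sub (PR_const _ 1) (PR_sub (PR_const _ 1) H0)) H1)
                                    (PR_mul (PR_sub (PR_const _ 1) H0) H2)).
move=> xs _ /=; case: eqP => [->|H]; first by rewrite mul0n mul1n.
have -> : 1 - C xs = 0 by lia.
by rewrite mul0n addn0 mul1n.
Qed.

Definition bsum (f : nat -> nat) n := natrec 0 (fun m y => y + f m) n.

Lemma PR_bsum k f A : PR k.+1 f -> PR k A ->
  PR k (fun xs => bsum (fun i => f (i :: xs)) (A xs)).
Proof.
move=> Hf HA.
have H2 : PR k.+2 (fun zs => f (map (nth 0 zs) (0 :: iota 2 k))).
  by apply: PR_reindex Hf _; rewrite /= size_iota.
have := PR_rec HA (PR_zero _) (PR_add (PR_proj _ 1) H2).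
move/PR_ext; apply=> xs Hxs; rewrite /bsum; elim: (A xs) => [|m IH] //=.
rewrite IH; congr (_ + f (m :: _)).
rewrite -(addn0 2) iotaDl -map_comp.
rewrite -[in RHS](mkseq_nth 0 xs) Hxs; exact: eq_map.
Qed.

Lemma bsum_thresh f n t : (forall m, m < n -> f m = (m < t)) -> bsum f n = minn t n.
Proof.
elim: n => [|n IH] H; first by rewrite /= minn0.
rewrite /bsum /= -/(bsum f n) IH => [|m Hm]; last by apply: H; apply: ltnW.
rewrite H //; case: (ltnP n t) => Hnt /=; lia.
Qed.

Lemma PR_app1 k f G : PR 1 (fun xs => f (nth 0 xs 0)) -> PR k G -> PR k (fun xs => f (G xs)).
Proof. move=> H1 H2; exact: (PR_comp1 H1 H2). Qed.

Lemma PR_app2 k f G1 G2 : PR 2 (fun xs => f (nth 0 xs 0) (nth 0 xs 1)) -> PR k G1 -> PR k G2 ->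
  PR k (fun xs => f (G1 xs) (G2 xs)).
Proof. move=> H0 H1 H2; exact: (PR_comp2 H0 H1 H2). Qed.

Definition divf c d := bsum (fun q => nat_of_bool (q.+1 * d <= c)) c.

Lemma divfE c d : 0 < d -> divf c d = c %/ d.
Proof.
move=> Hd; rewrite /divf (@bsum_thresh _ _ (c %/ d)) => [|m _].
  by apply/minn_idPl; apply: leq_div.
by rewrite -leq_divRL.
Qed.

Lemma PR_div k F G : PR k F -> PR k G -> PR k (fun xs => divf (F xs) (G xs)).
Proof.
move=> H1 H2; apply: (@PR_app2 k divf F G _ H1 H2).
have := @PR_bsum 2 (fun zs => nat_of_bool ((nth 0 zs 0).+1 * nth 0 zs 2 <= nth 0 zs 1))
   (fun xs => nth 0 xs 0) (PR_leb (PR_mul (PR_succ (PR_proj _ _)) (PR_proj _ _)) (PR_proj _ _)) (PR_proj _ _).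
by [].
Qed.

Definition v2f c := bsum (fun k => nat_of_bool (divf c (2 ^ k.+1) * 2 ^ k.+1 == c)) c.
Definition tailf c := divf c (2 ^ (v2f c).+1).

Lemma PR_v2 k F : PR k F -> PR k (fun xs => v2f (F xs)).
Proof.
move=> H; apply: (@PR_app1 k v2f F _ H).
have := @PR_bsum 1 (fun zs => nat_of_bool (divf (nth 0 zs 1) (2 ^ (nth 0 zs 0).+1) * 2 ^ (nth 0 zs 0).+1 == nth 0 zs 1))
   (fun xs => nth 0 xs 0).
apply.
  apply: PR_eqb; last exact: PR_proj.
  apply: PR_mul; last exact: PR_pow2 (PR_succ (PR_proj _ _)).
  exact: PR_div (PR_proj _ _) (PR_pow2 (PR_succ (PR_proj _ _))).
exact: PR_proj.
Qed.

Lemma PR_tail k F : PR k F -> PR k (fun xs => tailf (F xs)).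
Proof.
move=> H; apply: (@PR_app1 k tailf F _ H).
exact: PR_div (PR_proj _ _) (PR_pow2 (PR_succ (PR_v2 (PR_proj _ _)))).
Qed.

Notation code := CodeSeq.code.

Lemma code_cons m s : code (m :: s) = 2 ^ m * (code s).*2.+1.
Proof. by []. Qed.

Lemma code_gt0 m s : 0 < code (m :: s).
Proof. by rewrite code_cons muln_gt0 expn_gt0. Qed.

Lemma dvd_pow2_odd k m r : (2 ^ k %| 2 ^ m * r.*2.+1) = (k <= m).
Proof.
case: (leqP k m) => H.
  by apply: dvdn_mulr; apply: dvdn_exp2l.
apply/negP => Hd.
have : 2 ^ m.+1 %| 2 ^ m * r.*2.+1 by apply: dvdn_trans Hd; apply: dvdn_exp2l.
rewrite expnS [2 ^ m * _]mulnC dvdn_pmul2r ?expn_gt0 //.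
by rewrite dvdn2 /= odd_double.
Qed.

Lemma v2_code m s : v2f (code (m :: s)) = m.
Proof.
rewrite /v2f (@bsum_thresh _ _ m) => [|k _].
  apply/minn_idPl; rewrite code_cons.
  apply: leq_trans (ltnW (ltn_expl m (ltnSn 1))) _.
  by rewrite -{1}[2 ^ m]muln1 leq_mul2l ltn0Sn orbT.
rewrite divfE ?expn_gt0 //.
have -> : (code (m :: s) %/ 2 ^ k.+1 * 2 ^ k.+1 == code (m :: s)) = (2 ^ k.+1 %| code (m :: s)).
  by rewrite dvdn_eq.
by rewrite code_cons dvd_pow2_odd.
Qed.

Lemma tail_code m s : tailf (code (m :: s)) = code s.
Proof.
rewrite /tailf v2_code divfE ?expn_gt0 // code_cons expnS mulnC.
rewrite divnMr ?expn_gt0 //.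
by rewrite -addn1 -mul2n mulnC divnMDl // divn_small // addn0.
Qed.

Lemma tail0 : tailf 0 = 0.
Proof. by []. Qed.

Lemma size_code s : size s <= code s.
Proof.
elim: s => [|m s IH] //.
rewrite code_cons /=.
have H := expn_gt0 2 m.
have : (code s).*2.+1 <= 2 ^ m * (code s).*2.+1 by apply: leq_pmull.
rewrite -/(code s); lia.
Qed.

Definition sfx c j := natrec c (fun _ s => tailf s) j.

Lemma PR_suffix k F G : PR k F -> PR k G -> PR k (fun xs => sfx (F xs) (G xs)).
Proof.
move=> H1 H2; apply: (@PR_app2 k sfx F G _ H1 H2).
have := @PR_rec 2 (fun xs => nth 0 xs 1) (fun xs => nth 0 xs 0) (fun zs => tailf (nth 0 zs 1))
   (PR_proj _ _) (PR_proj _ _) (PR_tail (PR_proj _ _)).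
by [].
Qed.

Lemma suffix_code L j : sfx (code L) j = code (drop j L).
Proof.
elim: j => [|j IH]; first by rewrite drop0.
rewrite /sfx /= -/(sfx _ j) IH; case: (ltnP j (size L)) => Hj.
  by rewrite (drop_nth 0 Hj) tail_code.
by rewrite !drop_oversize //; apply: leqW.
Qed.

Definition alpha (s : seq nat) := foldr (fun m a => 2 ^ m.+1 * a) 1 s.

Lemma code_cat s t : code (s ++ t) = alpha s * code t + code s.
Proof.
elim: s => [|m s IH]; first by rewrite /= mul1n addn0.
rewrite cat_cons !code_cons IH /= expnS -/(alpha s).
set x := 2 ^ m; set a := alpha s; set b := code t; set c := code s.
rewrite -!mul2n; nia.
Qed.

Lemma natrecS b s k : natrec b s k.+1 = s k (natrec b s k).
Proof. by []. Qed.

Fixpoint lookup (tbl : seq (nat * nat)) (d m : nat) :=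
  if tbl is (k, v) :: t then (if m == k then v else lookup t d m) else d.

Lemma PR_lookup tbl d : PR 1 (fun xs => lookup tbl d (nth 0 xs 0)).
Proof.
elim: tbl => [|[k v] t IH] /=; first exact: PR_const.
have := PR_ite (PR_eqb (PR_proj 1 0) (PR_const 1 k)) (PR_const 1 v) IH.
move/PR_ext; apply=> xs _; by case: (_ == k).
Qed.

Lemma lookup_pickle (f : bool * nat -> nat) ls d l : l \in ls ->
  lookup [seq (pickle x, f x) | x <- ls] d (pickle l) = f l.
Proof.
have pinj : injective (pickle : bool * nat -> nat) := pcan_inj pickleK.
elim: ls => [|x ls IH] //=; rewrite in_cons.
move=> /orP [/eqP Hl|Hin]; first by subst l; rewrite eqxx.
case: (eqVneq (pickle l) (pickle x)) => [Hp|_]; last exact: IH.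
by rewrite (pinj _ _ Hp).
Qed.

Definition letters K : seq (bool * nat) := [seq (b, j) | b <- [:: false; true], j <- iota 0 K].

Lemma mem_letters K b j : j < K -> (b, j) \in letters K.
Proof.
move=> Hj; rewrite /letters /= !mem_cat.
have Hm : forall c : bool, ((c, j) \in [seq (c, x) | x <- iota 0 K]).
  move=> c; apply/mapP; exists j => //; rewrite mem_iota; lia.
by case: b; rewrite Hm ?orbT.
Qed.

Lemma word_codeE w : word_code w = code (map pickle w).
Proof. by []. Qed.

Section Transform.
Variables (tau : bool * nat -> word) (K : nat).

Definition alphaf m := lookup [seq (pickle l, alpha (map pickle (tau l))) | l <- letters K] 1 m.
Definition betaf m := lookup [seq (pickle l, code (map pickle (tau l))) | l <- letters K] 0 m.

Definition stepF (zs : seq nat) :=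
  let c := nth 0 zs 2 in let s := sfx c (c - (nth 0 zs 0).+1) in
  if s == 0 then 0 else alphaf (v2f s) * nth 0 zs 1 + betaf (v2f s).

Lemma stepF_eq k y c : stepF [:: k; y; c] =
  if sfx c (c - k.+1) == 0 then 0 else alphaf (v2f (sfx c (c - k.+1))) * y + betaf (v2f (sfx c (c - k.+1))).
Proof. by []. Qed.

Definition Fc c := natrec 0 (fun k y => stepF [:: k, y & [:: c]]) c.

Lemma PR_Fc : PR 1 (fun xs => Fc (nth 0 xs 0)).
Proof.
have HS : PR 3 stepF.
  rewrite /stepF.
  have Hs : PR 3 (fun zs => sfx (nth 0 zs 2) (nth 0 zs 2 - (nth 0 zs 0).+1)).
    exact: PR_suffix (PR_proj _ _) (PR_sub (PR_proj _ _) (PR_succ (PR_proj _ _))).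
  eapply PR_ite; [exact Hs | | exact: PR_zero].
  apply: PR_add.
    apply: PR_mul (PR_proj _ _).
    exact: (@PR_app1 3 alphaf _ (PR_lookup _ _) (PR_v2 Hs)).
  exact: (@PR_app1 3 betaf _ (PR_lookup _ _) (PR_v2 Hs)).
have := PR_rec (PR_proj 1 0) (PR_zero 1) HS.
move/PR_ext; apply=> xs Hxs.
rewrite /Fc; case: xs Hxs => [|x [|]] //= _.
Qed.

Definition Rw (ws : word) := code (map pickle (flatten (map tau ws))).

Lemma Rw_cons l ws : Rw (l :: ws) = alpha (map pickle (tau l)) * Rw ws + code (map pickle (tau l)).
Proof. by rewrite /Rw /= map_cat code_cat. Qed.

Lemma Fc_correct w : valid_word K w -> Fc (code (map pickle w)) = Rw w.
Proof.
move=> Hv; set c := code (map pickle w).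
have Hsz : size w <= c by rewrite /c -(size_map pickle); apply: size_code.
suff H : forall k, k <= c -> natrec 0 (fun k y => stepF [:: k, y & [:: c]]) k = Rw (drop (c - k) w).
  by rewrite /Fc H // subnn drop0.
elim=> [|k IH] Hk.
  by rewrite subn0 drop_oversize.
rewrite natrecS IH; last exact: ltnW.
rewrite stepF_eq suffix_code -map_drop.
have E1 : c - k = (c - k.+1).+1 by lia.
case Hd: (drop (c - k.+1) w) => [|l r]; first by [].
have Hr : drop (c - k) w = r by rewrite E1 -add1n -drop_drop Hd /= drop0.
have -> : map pickle (l :: r) = pickle l :: map pickle r by [].
rewrite eqn0Ngt code_gt0 /= v2_code Hr Rw_cons.
have Hl : l \in letters K.
  have : l \in w by rewrite -(cat_take_drop (c - k.+1) w) Hd mem_cat mem_head orbT.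
  case: l {Hd Hr} => b j Hin.
  apply: mem_letters.
  by move/allP: Hv => /(_ _ Hin).
by rewrite /alphaf /betaf !(lookup_pickle (fun l => _)).
Qed.

End Transform.

Theorem transform (tau : bool * nat -> word) K : exists S, forall w, valid_word K w ->
  prf_eval S [:: word_code w] (word_code (flatten (map tau w))).
Proof.
have [S HS] := PR_Fc tau K.
exists S => w Hv; have := HS [:: word_code w] erefl => /=.
by rewrite word_codeE Fc_correct.
Qed.

Section GroupLemmas.
Variable H : group.
Implicit Types x y z : H.
Implicit Type Y : seq H.

Lemma gmulgV x : gmul x (ginv x) = gone H.
Proof.
rewrite -[gmul x _]gmul1g -(gmulVg (ginv x)) -gmulA.
by rewrite [gmul (ginv x) (gmul _ _)]gmulA gmulVg gmul1g gmulVg.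
Qed.

Lemma gmulg1 x : gmul x (gone H) = x.
Proof. by rewrite -(gmulVg x) gmulA gmulgV gmul1g. Qed.

Lemma gmulKg x y : gmul (ginv x) (gmul x y) = y.
Proof. by rewrite gmulA gmulVg gmul1g. Qed.

Lemma ginv_uniq x y : gmul x y = gone H -> x = ginv y.
Proof. by move=> E; rewrite -[x]gmulg1 -(gmulgV y) gmulA E gmul1g. Qed.

Lemma ginvK x : ginv (ginv x) = x.
Proof. by symmetry; apply: ginv_uniq; apply: gmulgV. Qed.

Lemma ginvM x y : ginv (gmul x y) = gmul (ginv y) (ginv x).
Proof.
symmetry; apply: ginv_uniq.
by rewrite -gmulA [gmul (ginv x) _]gmulA gmulVg gmul1g gmulVg.
Qed.

Lemma ginv1 : ginv (gone H) = gone H.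
Proof. by symmetry; apply: ginv_uniq; rewrite gmul1g. Qed.

Lemma hom_one (f : H -> H) : (forall x y, f (gmul x y) = gmul (f x) (f y)) -> f (gone H) = gone H.
Proof.
move=> Hf; have E := Hf (gone H) (gone H); rewrite gmul1g in E.
by rewrite -[f (gone H)](gmulKg (f (gone H))) -E gmulVg.
Qed.

Definition letv (Y : seq H) (l : bool * nat) :=
  if l.1 then ginv (nth (gone H) Y l.2) else nth (gone H) Y l.2.

Lemma eval_cons Y l w : eval_word Y (l :: w) = gmul (letv Y l) (eval_word Y w).
Proof. by []. Qed.

Lemma eval_nil Y : eval_word Y [::] = gone H.
Proof. by []. Qed.

Lemma eval_cat Y s t : eval_word Y (s ++ t) = gmul (eval_word Y s) (eval_word Y t).
Proof.
elim: s => [|l s IH]; first by rewrite /= gmul1g.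
by rewrite cat_cons !eval_cons IH gmulA.
Qed.

Definition invw (w : word) : word := rev (map (fun l => (~~ l.1, l.2)) w).

Lemma eval_invw Y w : eval_word Y (invw w) = ginv (eval_word Y w).
Proof.
elim: w => [|l w IH]; first by rewrite /= ginv1.
rewrite /invw map_cons rev_cons -cats1 -/(invw w) eval_cat IH eval_cons eval_cons eval_nil.
rewrite gmulg1 ginvM; congr gmul.
by rewrite /letv /=; case: l.1; rewrite ?ginvK.
Qed.

Lemma valid_invw k w : valid_word k (invw w) = valid_word k w.
Proof. by rewrite /valid_word /invw all_rev all_map. Qed.

Lemma valid_flatten k (tau : bool * nat -> word) w :
  (forall l, valid_word k (tau l)) -> valid_word k (flatten (map tau w)).
Proof.
move=> Ht; elim: w => [|l w IH] //=.
by rewrite /valid_word all_cat -!/(valid_word _ _) Ht IH.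
Qed.

End GroupLemmas.

Section Product.
Variables (n : nat) (G : 'I_n -> group).

Lemma comp_eval (Y : seq (prod_group G)) w i :
  (eval_word Y w : prod_car G) i = eval_word [seq (y : prod_car G) i | y <- Y] w.
Proof.
elim: w => [|l w IH] //=.
rewrite -IH; congr gmul.
case: (ltnP l.2 (size Y)) => Hl.
  by case: l.1 => /=; rewrite (nth_map (prod_one G)).
by case: l.1 => /=; rewrite !nth_default ?size_map // ginv1.
Qed.

Lemma twisted_prod (phi : forall i, G i -> G i) (u v : prod_group G) :
  twisted_conj (prod_map phi) u v <->
  (forall i, twisted_conj (phi i) ((u : prod_car G) i) ((v : prod_car G) i)).
Proof.
split.
  by move=> [w ->] i; exists ((w : prod_car G) i).
move=> Hi.
pose w : prod_car G := fun i => proj1_sig (constructive_indefinite_description _ (Hi i)).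
exists (w : prod_group G); apply: functional_extensionality_dep => i.
exact: (proj2_sig (constructive_indefinite_description _ (Hi i))).
Qed.

End Product.

Lemma apply_transform (p S : prf) (tau : bool * nat -> word) K u v r :
  (forall w, valid_word K w -> prf_eval S [:: word_code w] (word_code (flatten (map tau w)))) ->
  valid_word K u -> valid_word K v ->
  prf_eval p [:: word_code (flatten (map tau u)); word_code (flatten (map tau v))] r ->
  prf_eval (PComp p [:: PComp S [:: PProj 0]; PComp S [:: PProj 1]]) [:: word_code u; word_code v] r.
Proof.
move=> HS Hu Hv Hp; apply: ev_comp Hp.
constructor; last constructor; last constructor.
  apply: ev_comp (HS _ Hu); constructor; last constructor.
  exact: (ev_proj 0 [:: word_code u; word_code v]).
apply: ev_comp (HS _ Hv); constructor; last constructor.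
exact: (ev_proj 1 [:: word_code u; word_code v]).
Qed.

Lemma Pall_lemma pm p1
  (Hm : forall ys, size ys = 2 -> prf_eval pm ys (nth 0 ys 0 * nth 0 ys 1))
  (H1 : forall ys, size ys = 2 -> prf_eval p1 ys 1) (I : eqType) (Q : I -> prf) (P : I -> Prop) (s : seq I) xs :
  size xs = 2 ->
  (forall i, i \in s -> exists b, prf_eval (Q i) xs b /\ (b = 1 <-> P i) /\ (b = 0 \/ b = 1)) ->
  exists r, prf_eval (foldr (fun q acc => PComp pm [:: q; acc]) p1 (map Q s)) xs r /\
     (r = 1 <-> forall i, i \in s -> P i) /\ (r = 0 \/ r = 1).
Proof.
move=> Hxs HQ.
elim: s HQ => [|i s IH] HQ /=.
  by exists 1; split; [exact: H1|split; [by []|right]].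
have [r [Hr [Er Br]]] := IH (fun j Hj => HQ j (mem_behead (s := i :: s) Hj)).
have [b [Hb [Eb Bb]]] := HQ i (mem_head _ _).
exists (b * r); split.
  apply: ev_comp; first by constructor; [exact: Hb | constructor; [exact: Hr | constructor]].
  exact: (Hm [:: b; r]).
split; last by case: Bb => ->; case: Br => ->; auto.
split.
  move=> E j; rewrite in_cons => /orP [/eqP ->|Hj].
    apply/Eb; case: Bb E => -> //; by rewrite mul0n.
  apply: (proj1 Er) Hj; case: Br E => -> //; by rewrite muln0.
move=> Hall; rewrite (proj2 Eb (Hall i (mem_head _ _))) (proj2 Er (fun j Hj => Hall j (mem_behead (s := i :: s) Hj))).
by [].
Qed.

Lemma gen_choice (H : group) (Y : seq H) (g : H) : generates Y ->
  {w | valid_word (size Y) w /\ eval_word Y w = g}.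
Proof.
move=> HY; apply: constructive_indefinite_description.
by have [w H1 H2] := HY g; exists w.
Qed.

Lemma flatten_map_flatten (A B : Type) (f : A -> seq B) (L : seq (seq A)) :
  flatten (map f (flatten L)) = flatten (map (fun x => flatten (map f x)) L).
Proof. by elim: L => [|x L IH] //=; rewrite map_cat flatten_cat IH. Qed.

Lemma flatten_pick (I : eqType) (A : Type) (f : I -> seq A) (s : seq I) i :
  uniq s -> i \in s -> flatten [seq (if j == i then f j else [::]) | j <- s] = f i.
Proof.
elim: s => [|j s IH] //= /andP [Hj Hu]; rewrite in_cons.
case: eqVneq => [-> _|Hne /= Hi]; last exact: IH.
rewrite -[RHS]cats0; congr cat.
elim: s Hj {IH Hu} => [|k s IH] //=; rewrite in_cons negb_or => /andP [Hk Hs].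
by rewrite eq_sym (negbTE Hk) IH.
Qed.

Section Back.
Unset Implicit Arguments.
Variables (n : nat) (G : 'I_n -> group) (phi : forall i : 'I_n, G i -> G i).
Variable Hs : forall i : 'I_n, TCP_solvable (phi i).

Let C i := constructive_indefinite_description _ (Hs i).
Let Yf i : seq (G i) := proj1_sig (C i).
Let HYf i : generates (Yf i) := proj1 (proj2_sig (C i)).
Let D i := constructive_indefinite_description _ (proj2 (proj2_sig (C i))).
Let pf i := proj1_sig (D i).
Let Hpf i : forall u v : word,
    valid_word (size (Yf i)) u -> valid_word (size (Yf i)) v ->
    (twisted_conj (phi i) (eval_word (Yf i) u) (eval_word (Yf i) v) ->
       prf_eval (pf i) [:: word_code u; word_code v] 1) /\
    (~ twisted_conj (phi i) (eval_word (Yf i) u) (eval_word (Yf i) v) ->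
       prf_eval (pf i) [:: word_code u; word_code v] 0) := proj2_sig (D i).

Let K0 := (\max_(i : 'I_n) size (Yf i)).+1.
Let HK i : size (Yf i) < K0.
Proof. rewrite ltnS; exact: (@leq_bigmax _ (fun i => size (Yf i)) i). Qed.
Let K0pos : 0 < K0. Proof. by []. Qed.

Let Yprod : seq (prod_group G) :=
  mkseq (fun j => ((fun i : 'I_n => if (i : nat) == j %/ K0 then nth (gone (G i)) (Yf i) (j %% K0)
                                    else gone (G i)) : prod_car G)) (n * K0).

Let HsY : size Yprod = n * K0.
Proof. by rewrite /Yprod size_mkseq. Qed.

Let tau (i : 'I_n) (l : bool * nat) : word :=
  if (l.2 %/ K0 == i) && (l.2 %% K0 < size (Yf i)) then [:: (l.1, l.2 %% K0)] else [::].

Let nthY i j : nth (gone (G i)) [seq (y : prod_car G) i | y <- Yprod] j =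
  if (i : nat) == j %/ K0 then nth (gone (G i)) (Yf i) (j %% K0) else gone (G i).
Proof.
case: (ltnP j (n * K0)) => Hj.
  by rewrite (nth_map (prod_one G)) ?size_mkseq // nth_mkseq.
rewrite nth_default; last by rewrite size_map size_mkseq.
have : n <= j %/ K0 by rewrite -(mulnK n K0pos) leq_div2r.
case: eqP => // E H; have := ltn_ord i; lia.
Qed.

Let Lproj i w : (eval_word Yprod w : prod_car G) i = eval_word (Yf i) (flatten (map (tau i) w)).
Proof.
rewrite comp_eval; elim: w => [|l w IH] //.
rewrite /= eval_cat -IH; congr gmul.
rewrite -/(letv _ l) /letv nthY /tau [l.2 %/ K0 == i]eq_sym.
case: eqP => _ /=; last by case: l.1; rewrite ?ginv1.
case: ltnP => Hl /=; first by rewrite gmulg1.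
by rewrite nth_default //; case: l.1; rewrite ?ginv1.
Qed.

Let valid_tau i l : valid_word (size (Yf i)) (tau i l).
Proof. by rewrite /tau; case: andP => [[_ H]|] //=; rewrite H. Qed.

Let lift (i : 'I_n) (w : word) : word := map (fun l => (l.1, i * K0 + l.2)) w.

Let tau_lift i i' w : valid_word (size (Yf i)) w ->
  flatten (map (tau i') (lift i w)) = if i == i' then w else [::].
Proof.
elim: w => [|[b r] w IH]; first by case: eqP.
rewrite /= => /andP [Hr Hw]; rewrite IH //.
have Hr' : r < K0 by apply: leq_trans Hr (ltnW (HK i)).
rewrite /tau /= divnMDl // modnMDl (divn_small Hr') (modn_small Hr') addn0.
case: (eqVneq i i') => [<-|Hne]; first by rewrite eqxx Hr.
by have -> : (i : nat) == i' = false by apply/negP => /eqP /val_inj E; rewrite E eqxx in Hne.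
Qed.

Lemma gen_Yprod : generates Yprod.
Proof.
move=> g.
pose wf i := proj1_sig (gen_choice ((g : prod_car G) i) (HYf i)).
have Hwf i : valid_word (size (Yf i)) (wf i) /\ eval_word (Yf i) (wf i) = (g : prod_car G) i.
  exact: proj2_sig (gen_choice ((g : prod_car G) i) (HYf i)).
exists (flatten [seq lift i (wf i) | i <- enum 'I_n]).
  rewrite HsY; apply/allP => l Hl; case/flatten_mapP: Hl => i _ Hl.
  case/mapP: Hl => [[b r] Hin ->] /=.
  have Hr0 : r < size (Yf i) by move/allP: (proj1 (Hwf i)) => /(_ _ Hin).
  have Hr : r < K0 by apply: ltn_trans Hr0 (HK i).
  have Hi := ltn_ord i.
  nia.
apply: functional_extensionality_dep => i'.
rewrite Lproj flatten_map_flatten -map_comp.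
have -> : [seq (flatten \o map (tau i')) (lift x (wf x)) | x <- enum 'I_n] =
          [seq (if x == i' then wf x else [::]) | x <- enum 'I_n].
  by apply: eq_map => x /=; rewrite tau_lift //; exact: (proj1 (Hwf x)).
by rewrite flatten_pick ?enum_uniq ?mem_enum // (proj2 (Hwf i')).
Qed.

Lemma dir_back : TCP_solvable (prod_map phi).
Proof.
exists Yprod; split; first exact: gen_Yprod.
pose Sf i := proj1_sig (constructive_indefinite_description _ (transform (tau i) (n * K0))).
have HSf i := proj2_sig (constructive_indefinite_description _ (transform (tau i) (n * K0))).
pose Q i := PComp (pf i) [:: PComp (Sf i) [:: PProj 0]; PComp (Sf i) [:: PProj 1]].
have [pm Hm] := PR_mul2; have [p1 H1] := PR_const 2 1.
exists (foldr (fun q acc => PComp pm [:: q; acc]) p1 (map Q (enum 'I_n))) => u v Hu Hv.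
pose P i := twisted_conj (phi i) ((eval_word Yprod u : prod_car G) i) ((eval_word Yprod v : prod_car G) i).
have HQ : forall i, i \in enum 'I_n -> exists b, prf_eval (Q i) [:: word_code u; word_code v] b /\
     (b = 1 <-> P i) /\ (b = 0 \/ b = 1).
  move=> i _.
  have Hu' := valid_flatten u (valid_tau i).
  have Hv' := valid_flatten v (valid_tau i).
  have [Ht Hf] := Hpf i _ _ Hu' Hv'.
  rewrite -!Lproj in Ht Hf.
  rewrite HsY in Hu Hv.
  case: (classic (P i)) => HP.
    exists 1; split; first exact: (apply_transform (HSf i) Hu Hv (Ht HP)).
    by split; [split | right].
  exists 0; split; first exact: (apply_transform (HSf i) Hu Hv (Hf HP)).
  by split; [split | left].
have [r [Hr [Er Br]]] := @Pall_lemma pm p1 Hm H1 _ Q P (enum 'I_n) [:: word_code u; word_code v] erefl HQ.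
split => Htc.
  suff E : r = 1 by rewrite -E.
  by apply/Er => i _; apply: (proj1 (twisted_prod phi _ _) Htc).
case: Br => E; first by rewrite -E.
exfalso; apply: Htc; apply/twisted_prod => i.
by apply: (proj1 Er E); rewrite mem_enum.
Qed.
End Back.

Section Fwd.
Unset Implicit Arguments.
Variables (n : nat) (G : 'I_n -> group) (phi : forall i : 'I_n, G i -> G i).
Variable Hhom : forall (i : 'I_n) (x y : G i), phi i (gmul x y) = gmul (phi i x) (phi i y).
Variable Hsolv : TCP_solvable (prod_map phi).
Variable i : 'I_n.

Definition emb (a : G i) : prod_group G :=
  (fun i' => match i =P i' with
             | ReflectT e => eq_rect i (fun k => gcar (G k)) a i' e
             | ReflectF _ => gone (G i') end) : prod_car G.

Lemma emb_at a : (emb a : prod_car G) i = a.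
Proof. by rewrite /emb; case: (i =P i) => [e|] //; rewrite (eq_irrelevance e erefl). Qed.

Lemma emb_mul a b : emb (gmul a b) = gmul (emb a) (emb b).
Proof.
apply: functional_extensionality_dep => i'; rewrite /= /prod_mul /emb.
by case: (i =P i') => [e|_]; [case: i' / e | rewrite gmul1g].
Qed.

Lemma emb_inv a : emb (ginv a) = ginv (emb a).
Proof.
apply: functional_extensionality_dep => i'; rewrite /= /prod_inv /emb.
by case: (i =P i') => [e|_]; [case: i' / e | rewrite ginv1].
Qed.

Lemma emb_one : emb (gone (G i)) = gone (prod_group G).
Proof.
apply: functional_extensionality_dep => i'; rewrite /= /prod_one /emb.
by case: (i =P i') => [e|_]; [case: i' / e |].
Qed.

Lemma emb_phi a : prod_map phi (emb a) = emb (phi i a).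
Proof.
apply: functional_extensionality_dep => i'; rewrite /prod_map /emb.
case: (i =P i') => [e|_]; first by case: i' / e.
by rewrite hom_one //; apply: Hhom.
Qed.

Lemma dir_fwd : TCP_solvable (phi i).
Proof.
case: Hsolv => Y [HY [p Hp]].
pose Yi := [seq (y : prod_car G) i | y <- Y].
pose Wf j := proj1_sig (gen_choice (emb (nth (gone (G i)) Yi j)) HY).
have HWf j : valid_word (size Y) (Wf j) /\ eval_word Y (Wf j) = emb (nth (gone (G i)) Yi j).
  exact: proj2_sig (gen_choice (emb (nth (gone (G i)) Yi j)) HY).
pose tau (l : bool * nat) := if l.1 then invw (Wf l.2) else Wf l.2.
have Hvt l : valid_word (size Y) (tau l).
  by rewrite /tau; case: l.1; rewrite ?valid_invw; exact: (proj1 (HWf _)).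
have Lemb u : eval_word Y (flatten (map tau u)) = emb (eval_word Yi u).
  elim: u => [|l u IH]; first by rewrite emb_one.
  rewrite /= eval_cat IH emb_mul.
  by rewrite /tau; case: l.1; rewrite ?eval_invw (proj2 (HWf _)) ?emb_inv.
have Htc a b : twisted_conj (phi i) a b <-> twisted_conj (prod_map phi) (emb a) (emb b).
  split => [[w ->]|[w E]].
    by exists (emb w); rewrite emb_phi -emb_mul -emb_inv -emb_mul.
  exists ((w : prod_car G) i).
  have := congr1 (fun f : prod_car G => f i) E.
  by rewrite /= emb_at /prod_mul /prod_inv /prod_map /= emb_at.
exists Yi; split.
  move=> g; have [w Hw Ew] := HY (emb g); exists w; first by rewrite size_map.
  by rewrite -comp_eval Ew emb_at.
have [S HS] := transform tau (size Y).
exists (PComp p [:: PComp S [:: PProj 0]; PComp S [:: PProj 1]]) => u v Hu Hv.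
rewrite size_map in Hu Hv.
have Hu' := valid_flatten u Hvt; have Hv' := valid_flatten v Hvt.
have [Ht Hf] := Hp _ _ Hu' Hv'.
rewrite !Lemb -Htc in Ht Hf.
split => H.
  exact: (apply_transform HS Hu Hv (Ht H)).
exact: (apply_transform HS Hu Hv (Hf H)).
Qed.
End Fwd.

Theorem corollary3p26 (n : nat) (G : 'I_n -> group)
  (phi : forall i : 'I_n, G i -> G i)
  (Gfg : forall i : 'I_n, exists Y : seq (G i), generates Y)
  (phi_aut : forall i : 'I_n, is_aut (phi i)) :
  TCP_solvable (prod_map phi) <-> (forall i : 'I_n, TCP_solvable (phi i)).
Proof.
split.
  move=> H i; exact: (@dir_fwd n G phi (fun j => proj1 (phi_aut j)) H i).
exact: dir_back.
Qed.
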